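(* Let $(X,\mathrm{d})$ be a metric space, $P\subseteq X$ finite with $n$ points, $r,\varepsilon>0$, and let $\mathcal{F}$ be an $(r_0,r,r(1+\varepsilon),p_0,p_1,p_2)$-sensitive family of hash functions on $X$ for some $r_0\le r$; let $\varrho=\ln p_1/\ln p_2$. For any query point $q\in X$, during the query procedure of the structure $\mathcal{A}(P,r,\varepsilon)$ (described in the context), the expected total number of collisions of $q$ with points of $N_P(q,r(1+\varepsilon))\setminus\mathcal{B}(q,r_0)$ is $\tilde O\!\left(\frac{n^\alpha}{p_1}\,|N_P(q,r(1+\varepsilon))\setminus\mathcal{B}(q,r_0)|\right)$, where $\alpha=\varrho\left(1-\frac{\ln p_0}{\ln p_1}\right)\le\varrho$.
   Context: $\mathcal{B}(x,R)$ is the closed ball of center $x$ and radius $R$; $N_P(x,R)$ is the set of points of $P\setminus\{x\}$ lying in $\mathcal{B}(x,R)$. A family $\mathcal{F}$ of functions $X\to\mathbb{Z}$ with a probability distribution is $(r_0,r_1,r_2,p_0,p_1,p_2)$-sensitive ($r_0\le r_1<r_2$, $1>p_0\ge p_1>p_2>0$) if for all $x,y\in X$: $\mathrm{d}(x,y)\le r_1\Rightarrow \Pr[f(x)=f(y)]\ge p_1$; $\mathrm{d}(x,y)\ge r_2\Rightarrow \Pr[f(x)=f(y)]\le p_2$; $\mathrm{d}(x,y)\ge r_0\Rightarrow \Pr[f(x)=f(y)]\le p_0$. Structure $\mathcal{A}(P,r,\varepsilon)$: let $k=\lceil \ln n/\ln(1/p_2)\rceil$, $L=\lceil n^\varrho/p_1\rceil$,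 and let $\mathcal{G}$ be the family of maps $g=(f_1,\dots,f_k):X\to\mathbb{Z}^k$ with coordinates drawn independently from $\mathcal{F}$. For each of $\lceil c\ln n\rceil$ rounds ($c>0$ a fixed constant), independently draw $g_1,\dots,g_L$ from $\mathcal{G}$ and insert every $p\in P$ into hash table $H_j$ under key $g_j(p)$. Query: for every round and every $j$, retrieve all points stored in $H_j$ under key $g_j(q)$. A collision of $q$ with $p$ is an occurrence of $p$ among the retrieved points of some table in some round, counted over all tables and rounds. $\tilde O$ hides factors polylogarithmic in $n$ (with $c$ constant). *)

(* Defs.v *)
From mathcomp Require Import all_boot all_order all_algebra finmap.
From mathcomp Require Import all_classical all_reals all_analysis.

Set Implicit Arguments.
Unset Strict Implicit.
Unset Printing Implicit Defensive.

Import Order.TTheory GRing.Theory Num.Theory.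
Local Open Scope classical_set_scope.
Local Open Scope ring_scope.

Definition is_metric (R : realType) (X : Type) (d : X -> X -> R) : Prop :=
  [/\ forall x y, 0 <= d x y,
      forall x y, d x y = 0 <-> x = y,
      forall x y, d x y = d y x &
      forall x y z, d x z <= d x y + d y z].

Definition cyl (X : Type) (s : seq (X * int)) : set (X -> int) :=
  [set f | foldr (fun xz (Q : Prop) => f xz.1 = xz.2 /\ Q) True s].

(* A random function X -> Z on (Omega, measurable) : the events
   {w | h w \in C}, C a cylinder set (these generate the product
   sigma-algebra on Z^X), are measurable. *)
Definition random_hash (d : measure_display) (Omega : measurableType d)
  (X : Type) (h : Omega -> X -> int) : Prop :=
  forall s : seq (X * int), measurable (h @^-1` cyl s).

Definition pr_coll (d : measure_display) (Omega : measurableType d)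
  (R : realType) (P : probability Omega R) (X : Type)
  (h : Omega -> X -> int) (x y : X) : \bar R :=
  P [set w | h w x = h w y].

Definition sensitive (R : realType) (X : Type) (dist : X -> X -> R)
  (dF : measure_display) (OmegaF : measurableType dF)
  (PF : probability OmegaF R) (hash : OmegaF -> X -> int)
  (r0 r1 r2 p0 p1 p2 : R) : Prop :=
  [/\ r0 <= r1 /\ r1 < r2, (p0 < 1 /\ p1 <= p0 /\ p2 < p1 /\ 0 < p2),
      (forall x y, dist x y <= r1 -> (p1%:E <= pr_coll PF hash x y)%E),
      (forall x y, r2 <= dist x y -> (pr_coll PF hash x y <= p2%:E)%E) &
      (forall x y, r0 <= dist x y -> (pr_coll PF hash x y <= p0%:E)%E)].

(* The random function h (on (Omega, P)) is distributed as F (hash under PF):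
   equal laws on the product sigma-algebra of Z^X, i.e. equal
   probabilities of every cylinder event. *)
Definition same_law (R : realType) (X : Type)
  (d : measure_display) (Omega : measurableType d) (P : probability Omega R)
  (h : Omega -> X -> int)
  (dF : measure_display) (OmegaF : measurableType dF)
  (PF : probability OmegaF R) (hash : OmegaF -> X -> int) : Prop :=
  forall s : seq (X * int), P (h @^-1` cyl s) = PF (hash @^-1` cyl s).

(* Mutual independence of the random functions (h i)_{i in I}: product rule
   for every finite subfamily J and every choice of cylinder events (these
   form a pi-system generating each sigma(h i)). *)
Definition mutually_independent (R : realType) (X : Type)
  (d : measure_display) (Omega : measurableType d) (P : probability Omega R)
  (I : finType) (h : I -> Omega -> X -> int) : Prop :=
  forall (J : {set I}) (s : I -> seq (X * int)),
    P (\big[setI/setT]_(i in J) (h i @^-1` cyl (s i)))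
    = (\prod_(i in J) fine (P (h i @^-1` cyl (s i))))%:E.

(* ceiling of a real, as a natural number (used for nonnegative arguments) *)
Definition ceil_nat (R : realType) (x : R) : nat := `|Num.ceil x|%N.

(* Parameters of the structure A(P, r, eps), with n = |P|. *)
Definition k_param (R : realType) (n : nat) (p2 : R) : nat :=
  ceil_nat (ln (n%:R : R) / ln (1 / p2)).
Definition rho (R : realType) (p1 p2 : R) : R := ln p1 / ln p2.
Definition L_param (R : realType) (n : nat) (p1 p2 : R) : nat :=
  ceil_nat ((n%:R : R) `^ (rho p1 p2) / p1).
Definition rounds (R : realType) (c : R) (n : nat) : nat :=
  ceil_nat (c * ln (n%:R : R)).

(* N_P(q, rr) \ B(q, r0): points p of P \ {q} with r0 < d(q,p) <= rr. *)
Definition annulus (R : realType) (X : choiceType) (dist : X -> X -> R)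
  (P : {fset X}) (q : X) (r0 rr : R) : {fset X} :=
  [fset p in P | [&& p != q, dist q p <= rr & ~~ (dist q p <= r0)]]%fset.

(* Index of a hash function of the structure: (round, table j, coordinate). *)
Definition hindex (Rn Ln k : nat) : finType := ('I_Rn * 'I_Ln * 'I_k)%type.

(* Number of collisions of q with points of S, given all drawn coordinate
   functions h (t, j, i): over every round t and table j, the points p of S
   stored in H_j under key g_j(q), i.e. with g_j(p) = g_j(q). *)
Definition collisions (X : choiceType) (Rn Ln k : nat)
  (h : hindex Rn Ln k -> X -> int) (S : {fset X}) (q : X) : nat :=
  \sum_(t < Rn) \sum_(j < Ln) \sum_(p <- S)
     [forall i : 'I_k, h (t, j, i) p == h (t, j, i) q].

(* Main.v *)
Require Import Defs.
From mathcomp Require Import all_boot all_order all_algebra finmap.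
From mathcomp Require Import all_classical all_reals all_analysis.
From mathcomp Require Import ring lra zify.
From mathcomp Require Import measurable_realfun.

Import Order.TTheory GRing.Theory Num.Theory.
Local Open Scope classical_set_scope.
Local Open Scope ring_scope.


Section Sets.
Context {T : Type}.

Lemma mem_bigU (I : eqType) (r : seq I) (P : pred I) (F : I -> set T) w :
  (\big[setU/set0]_(i <- r | P i) F i) w <-> exists i, [/\ i \in r, P i & F i w].
Proof.
elim: r => [|a r IH]; first by rewrite big_nil; split => // -[i []].
rewrite big_cons; case: ifP => Pa.
- split.
  + case=> [Fa|/IH [i [ir Pi Fi]]]; first by exists a; rewrite mem_head.
    by exists i; rewrite in_cons ir orbT.
  + case=> i [+ Pi Fi]; rewrite in_cons => /orP [/eqP Ei|ir]; first by left; rewrite -Ei.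
    by right; apply/IH; exists i.
- rewrite IH; split; case=> i [ir Pi Fi]; exists i; split => //.
  + by rewrite in_cons ir orbT.
  + move: ir; rewrite in_cons => /orP [/eqP Ei|//].
    by move: Pa; rewrite -Ei Pi.
Qed.

Lemma mem_bigI (I : eqType) (r : seq I) (P : pred I) (F : I -> set T) w :
  (\big[setI/setT]_(i <- r | P i) F i) w <-> forall i, i \in r -> P i -> F i w.
Proof.
elim: r => [|a r IH]; first by rewrite big_nil; split.
rewrite big_cons; case: ifP => Pa.
- split.
  + case=> Fa /IH H i; rewrite in_cons => /orP [/eqP->//|]; exact: H.
  + move=> H; split; first by apply: H => //; rewrite mem_head.
    by apply/IH => i ir; apply: H; rewrite in_cons ir orbT.
- rewrite IH; split => H i ir Pi.
  + move: ir; rewrite in_cons => /orP [/eqP Ei|ir]; last exact: H.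
    by move: Pa; rewrite -Ei Pi.
  + by apply: H => //; rewrite in_cons ir orbT.
Qed.
End Sets.

Definition zof (N z : nat) : int := z%:Z - N%:Z.
Definition Bz {Om X : Type} (hh : Om -> X -> int) (x y : X) (v : int) : set Om :=
  hh @^-1` cyl [:: (x, v); (y, v)].
Definition Ut {Om X : Type} (hh : Om -> X -> int) (x y : X) (N : nat) : set Om :=
  \big[setU/set0]_(z < N.*2.+1) Bz hh x y (zof N z).
Definition Eqs {Om X : Type} (hh : Om -> X -> int) (x y : X) : set Om :=
  [set w | hh w x = hh w y].

Lemma memB {Om X : Type} (hh : Om -> X -> int) x y v w :
  Bz hh x y v w <-> hh w x = v /\ hh w y = v.
Proof. by rewrite /Bz /cyl /=; split => [[? [? _]]|[? ?]]. Qed.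

Lemma memU {Om X : Type} (hh : Om -> X -> int) x y N w :
  Ut hh x y N w <-> exists z : 'I_(N.*2.+1), hh w x = zof N z /\ hh w y = zof N z.
Proof.
rewrite /Ut mem_bigU; split.
- by case=> z [_ _ /memB H]; exists z.
- by case=> z /memB H; exists z; split => //; rewrite mem_index_enum.
Qed.

Lemma U_sub {Om X : Type} (hh : Om -> X -> int) x y N : Ut hh x y N `<=` Eqs hh x y.
Proof. by move=> w /memU [z [H1 H2]]; rewrite /Eqs /= H1 H2. Qed.

Lemma U_mono {Om X : Type} (hh : Om -> X -> int) x y N : Ut hh x y N `<=` Ut hh x y N.+1.
Proof.
move=> w /memU [z [H1 H2]].
have zlt : (z.+1 < N.+1.*2.+1)%N by have := ltn_ord z; lia.
apply/memU; exists (Ordinal zlt); rewrite /zof /= in H1 H2 *; split; lia.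
Qed.

Lemma U_cover {Om X : Type} (hh : Om -> X -> int) x y N w :
  hh w x = hh w y -> (`|hh w x|%N <= N)%N -> Ut hh x y N w.
Proof.
move=> Exy Hn.
have zlt : (absz (hh w x + N%:Z)%R < N.*2.+1)%N by lia.
apply/memU; exists (Ordinal zlt); rewrite /zof /=; lia.
Qed.

Section Meas.
Context {d : measure_display} {Om : measurableType d} {X : Type}.

Lemma U_meas (hh : Om -> X -> int) x y N : random_hash hh -> measurable (Ut hh x y N).
Proof. by move=> rh; apply: bigsetU_measurable => z _; exact: rh. Qed.

Lemma Eq_meas (hh : Om -> X -> int) x y : random_hash hh -> measurable (Eqs hh x y).
Proof.
move=> rh; have -> : Eqs hh x y = \bigcup_N Ut hh x y N.
  apply/seteqP; split => w.
  - by move=> E; exists `|hh w x|%N => //; exact: U_cover.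
  - by case=> N _; exact: U_sub.
by apply: bigcup_measurable => N _; exact: U_meas.
Qed.
End Meas.


Lemma ceil_nat_bounds {R : realType} (x : R) : 0 <= x ->
  x <= (ceil_nat x)%:R /\ (ceil_nat x)%:R < x + 1.
Proof.
move=> x0; rewrite /ceil_nat.
have c0 : (0 <= Num.ceil x)%R by rewrite real_ceil_ge0 ?num_real//; lra.
rewrite natr_absz ger0_norm //.
split; first exact: ceil_ge.
have := ceilB1_lt x; rewrite intrD /=; lra.
Qed.

Lemma alpha_le {R : realType} (p0 p1 p2 : R) :
  p0 < 1 -> p1 <= p0 -> p2 < p1 -> 0 < p2 ->
  rho p1 p2 * (1 - ln p0 / ln p1) <= rho p1 p2.
Proof.
move=> h0 h1 h2 h3.
have a0 : ln p0 < 0 by apply: ln_lt0; apply/andP; split; lra.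
have b0 : ln p1 < 0 by apply: ln_lt0; apply/andP; split; lra.
have c0 : ln p2 < 0 by apply: ln_lt0; apply/andP; split; lra.
have r0 : 0 <= rho p1 p2 by rewrite /rho ler_ndivlMr // mul0r; lra.
have q0 : 0 <= ln p0 / ln p1 by rewrite ler_ndivlMr // mul0r; lra.
have : 0 <= rho p1 p2 * (ln p0 / ln p1) by exact: mulr_ge0.
rewrite mulrBr mulr1; lra.
Qed.

Lemma alE_lem {R : realType} (a b cc l : R) : b != 0 -> cc != 0 ->
  b / cc * (1 - a / b) * l = b / cc * l + - (l * a / cc).
Proof. by move=> hb hc; field; rewrite hb hc. Qed.

Lemma fin_alg {R : realType} (Rn Ln pk c l E A P0 p1 : R) :
 0 <= Rn -> 0 <= Ln -> 0 <= pk -> 0 < p1 -> p1 <= 1 -> 0 <= A -> 0 <= E ->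
 0 <= P0 -> 0 <= c -> 0 <= l ->
 Rn <= (c+1)*(1+l) -> Ln <= E/p1 + 1 -> pk <= P0 -> E * P0 = A -> P0 <= A ->
 Rn * Ln * pk <= 2*(c+1)*(1+l)^+1*(A/p1).
Proof.
move=> R0 L0 pk0 p10 p11 A0 E0 P00 c0 l0 HR HL Hk key1 key2.
have HA : A <= A/p1 by rewrite ler_pdivlMr // ler_piMr.
have E1 : 0 <= E / p1 + 1 by rewrite addr_ge0 // divr_ge0 // ltW.
have H1 : Ln * pk <= 2 * (A/p1).
  apply: (le_trans (ler_wpM2r pk0 HL)).
  apply: (le_trans (ler_wpM2l E1 Hk)).
  rewrite mulrDl mul1r mulrAC key1.
  have : P0 <= A / p1 by exact: le_trans HA.
  move: (A / p1) (P0) => a b; lra.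
rewrite -mulrA expr1; apply: (le_trans (ler_wpM2l R0 H1)).
have H2 : 0 <= 2 * (A / p1) by rewrite mulr_ge0 // divr_ge0 // ltW.
apply: (le_trans (ler_wpM2r H2 HR)).
have -> : (c + 1) * (1 + l) * (2 * (A / p1)) = 2 * (c + 1) * (1 + l) * (A / p1) by ring.
exact: lexx.
Qed.

Lemma arith {R : realType} (c : R) (n : nat) (p0 p1 p2 : R) :
  0 < c -> (1 <= n)%N ->
  p0 < 1 -> p1 <= p0 -> p2 < p1 -> 0 < p2 ->
  (rounds c n)%:R * (L_param n p1 p2)%:R * p0 ^+ (k_param n p2)
  <= 2 * (c + 1) * (1 + ln (n%:R : R)) ^+ 1
       * ((n%:R : R) `^ (rho p1 p2 * (1 - ln p0 / ln p1)) / p1).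
Proof.
move=> hc hn h0 h1 h2 h3.
have a0 : ln p0 < 0 by apply: ln_lt0; apply/andP; split; lra.
have b0 : ln p1 < 0 by apply: ln_lt0; apply/andP; split; lra.
have c0 : ln p2 < 0 by apply: ln_lt0; apply/andP; split; lra.
have p10 : 0 < p1 by lra.
have p11 : p1 <= 1 by lra.
have p00 : 0 <= p0 by lra.
have n1 : (1 : R) <= n%:R by rewrite ler1n.
have l0 : 0 <= ln (n%:R : R) by exact: ln_ge0.
set l := ln (n%:R : R) in l0 *.
have nE x : (n%:R : R) `^ x = expR (x * l).
  by rewrite /powR ifF //; apply/negbTE; rewrite pnatr_eq0 -lt0n.
rewrite !nE.
set rh := rho p1 p2.
have rhE : rh = ln p1 / ln p2 by [].
have r0 : 0 <= rh by rewrite rhE ler_ndivlMr // mul0r; lra.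
have [_ HR] := ceil_nat_bounds _ (mulr_ge0 (ltW hc) l0).
have HR' : (rounds c n)%:R <= (c + 1) * (1 + l).
  rewrite /rounds; apply: ltW; apply: (lt_le_trans HR).
  have : 0 <= c * l by exact: mulr_ge0 (ltW hc) l0.
  nra.
have e0 : 0 <= expR (rh * l) / p1 by apply: divr_ge0; [exact: expR_ge0|lra].
have [_ HL] := ceil_nat_bounds _ e0.
have HL' : (L_param n p1 p2)%:R <= expR (rh * l) / p1 + 1.
  by rewrite /L_param nE; exact: ltW.
have lp2 : ln (1 / p2) = - ln p2.
  by rewrite div1r lnV // posrE.
have kx0 : 0 <= l / ln (1 / p2) by rewrite lp2; apply: divr_ge0; lra.
have [Hk _] := ceil_nat_bounds _ kx0.
have Hk' : p0 ^+ (k_param n p2) <= expR (- (l * ln p0 / ln p2)).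
  rewrite -[p0 ^+ _]lnK; last by rewrite posrE exprn_gt0 //; lra.
  rewrite ler_expR lnXn; last lra.
  rewrite -mulr_natr.
  have : l / ln (1 / p2) * ln p0 >= (k_param n p2)%:R * ln p0.
    by rewrite ler_wnM2r //; lra.
  rewrite lp2 invrN mulrN mulNr => H.
  by rewrite mulrC (le_trans H) // mulrAC.
have P00 : 0 <= expR (- (l * ln p0 / ln p2)) by apply/ltW/expR_gt0.
have alE : rh * (1 - ln p0 / ln p1) * l = rh * l + - (l * ln p0 / ln p2).
  by rewrite rhE; apply: alE_lem; rewrite lt_eqF.
have key1 : expR (rh * l) * expR (- (l * ln p0 / ln p2)) = expR (rh * (1 - ln p0 / ln p1) * l).
  by rewrite alE expRD.
have key2 : expR (- (l * ln p0 / ln p2)) <= expR (rh * (1 - ln p0 / ln p1) * l).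
  rewrite alE expRD -{1}[expR (- _)]mul1r ler_wpM2r //.
  by rewrite -expR0 ler_expR; exact: mulr_ge0.
have A0 : 0 <= expR (rh * (1 - ln p0 / ln p1) * l) by apply/ltW/expR_gt0.
have pk0 : 0 <= p0 ^+ (k_param n p2) by exact: exprn_ge0.
have E0 : 0 <= expR (rh * l) by apply/ltW/expR_gt0.
exact: (fin_alg _ _ _ _ _ _ _ _ _ (ler0n _ _) (ler0n _ _) pk0 p10 p11 A0 E0 P00 (ltW hc) l0 HR' HL' Hk' key1 key2).
Qed.


Lemma prob_fine {R : realType} {d} {T : measurableType d} (P : probability T R) A :
  measurable A -> P A = (fine (P A))%:E.
Proof. by move=> mA; rewrite fineK // fin_num_measure. Qed.

Section Key.
Context {R : realType} {X : Type} {d : measure_display} {Om : measurableType d}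
  (Pr : probability Om R) {dF : measure_display} {OmF : measurableType dF}
  (PF : probability OmF R) (hash : OmF -> X -> int)
  (I : finType) (h : I -> Om -> X -> int) (x y : X) (p0 : R).
Hypotheses (rhash : random_hash hash) (rh : forall i, random_hash (h i))
  (law : forall i, same_law Pr (h i) PF hash) (indep : mutually_independent Pr h)
  (hp0 : (PF (Eqs hash x y) <= p0%:E)%E).

Lemma sum_le_p0 i N :
  0 <= \sum_(z < N.*2.+1) fine (Pr (Bz (h i) x y (zof N z))) <= p0.
Proof.
apply/andP; split.
  by apply: sumr_ge0 => z _; apply: fine_ge0; exact: measure_ge0.
rewrite -lee_fin -sumEFin.
have eqz (z : 'I_N.*2.+1) : (fine (Pr (Bz (h i) x y (zof N z))))%:E = PF (Bz hash x y (zof N z)).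
  by rewrite -prob_fine; [exact: law | exact: rh].
rewrite (eq_bigr _ (fun z _ => eqz z)).
rewrite -measure_bigsetU_ord.
- apply: le_trans hp0; apply: le_measure; rewrite ?inE.
  + exact: U_meas.
  + exact: Eq_meas.
  + exact: U_sub.
- by move=> z; exact: rhash.
- move=> z z' _ _ [w [/memB [H1 _] /memB [H2 _]]].
  by apply: val_inj => /=; move: H1 H2; rewrite /zof; lia.
Qed.


Lemma FN_bound (K : {set I}) N :
  (Pr (\big[setI/setT]_(i in K) Ut (h i) x y N) <= (p0 ^+ #|K|)%:E)%E.
Proof.
set M := N.*2.+1.
pose G (f : {ffun I -> 'I_M}) :=
  \big[setI/setT]_(i in K) Bz (h i) x y (zof N (f i)).
pose pf := pffun_on (ord0 : 'I_M) (fun i => i \in K) predT.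
have mG f : measurable (G f).
  by apply: bigsetI_measurable => i _; exact: rh.
have step1 : (Pr (\big[setI/setT]_(i in K) Ut (h i) x y N)
    <= \sum_(f \in [set` enum pf]) Pr (G f))%E.
  apply: content_sub_fsum.
  - exact: finite_seq.
  - by move=> f _; exact: mG.
  - by apply: bigsetI_measurable => i _; exact: U_meas.
  - move=> w /mem_bigI H.
    pose f := [ffun i => if i \in K then
                 odflt ord0 [pick z : 'I_M | `[< Bz (h i) x y (zof N z) w >] ]
               else ord0].
    exists f.
      rewrite /= mem_enum; apply/pffun_onP; split.
      + by apply/fintype.subsetP => i; rewrite inE ffunE; case: ifP.

      + by move=> i _.
    apply/mem_bigI => i _ iK; rewrite ffunE iK.
    case: pickP => [z /asboolP //| none].
    have := H i (mem_index_enum _) iK => /memU [z Hz].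
    by have := none z; rewrite asboolT //; apply/memB.
apply: (le_trans step1).
rewrite -fsbig_seq ?enum_uniq // big_enum /=.
have eqG f : Pr (G f) = (\prod_(i in K) fine (Pr (Bz (h i) x y (zof N (f i)))))%:E.
  exact: (indep K (fun i => [:: (x, zof N (f i)); (y, zof N (f i))])).
rewrite (eq_bigr _ (fun f _ => eqG f)) sumEFin lee_fin.
rewrite -(big_distr_big (ord0 : 'I_M) (fun i => i \in K) predT
           (fun i z => fine (Pr (Bz (h i) x y (zof N z))))).
rewrite -prodr_const; apply: ler_prod => i _.
exact: sum_le_p0.
Qed.

Lemma key (K : {set I}) :
  measurable [set w | forall i, i \in K -> h i w x = h i w y] /\
  (Pr [set w | forall i, i \in K -> h i w x = h i w y] <= (p0 ^+ #|K|)%:E)%E.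
Proof.
set E := [set w | _].
pose F N := \big[setI/setT]_(i in K) Ut (h i) x y N.
have mF N : measurable (F N).
  by apply: bigsetI_measurable => i _; exact: U_meas.
have EF : E = \bigcup_N F N.
  apply/seteqP; split => w.
  - move=> HE; exists (\max_(i in K) `|h i w x|%N) => //.
    apply/mem_bigI => i _ iK; apply: U_cover; first exact: HE.
    by apply: (@leq_bigmax_cond _ (fun j => j \in K) (fun j => `|h j w x|%N) i).
  - case=> N _ /mem_bigI H i iK.
    exact: (@U_sub _ _ (h i) x y N w (H i (mem_index_enum _) iK)).
have mE : measurable E by rewrite EF; exact: bigcup_measurable.
split => //.
have ndF : nondecreasing_seq F.
  apply/nondecreasing_seqP => N; apply/subsetPset => w /mem_bigI H.
  by apply/mem_bigI => i ir iK; exact: (@U_mono _ _ (h i) x y N w (H i ir iK)).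
have cv := nondecreasing_cvg_mu (mu:=Pr) mF (bigcup_measurable (fun N _ => mF N)) ndF.
rewrite -EF in cv.
rewrite -(cvg_lim _ cv) //; apply: lime_le; first by apply/cvg_ex; eexists; exact: cv.
by apply: nearW => N; exact: FN_bound.
Qed.

End Key.


Lemma int_sum {R : realType} {d} {T : measurableType d} (mu : {measure set T -> \bar R})
  (A : Type) (s : seq A) (g : A -> T -> R) :
  (forall a, measurable_fun setT (g a)) -> (forall a w, 0 <= g a w) ->
  (\int[mu]_w (\sum_(a <- s) g a w)%:E = \sum_(a <- s) \int[mu]_w (g a w)%:E)%E.
Proof.
move=> mg g0.
under eq_integral => w _ do rewrite -sumEFin.
apply: ge0_integral_sum => //.
- by move=> a; apply/measurable_EFinP; exact: mg.
- by move=> a w _; rewrite lee_fin.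
Qed.

Theorem lemma3 (R : realType) (c : R) (hc : 0 < c) :
  exists (C : R) (e : nat), 0 < C /\
  forall (X : choiceType) (dist : X -> X -> R) (P : {fset X})
    (r eps r0 p0 p1 p2 : R)
    (dF : measure_display) (OmegaF : measurableType dF)
    (PF : probability OmegaF R) (hash : OmegaF -> X -> int)
    (q : X)
    (d : measure_display) (Omega : measurableType d)
    (Pr : probability Omega R)
    (h : hindex (rounds c #|` P|%fset) (L_param #|` P|%fset p1 p2)
                (k_param #|` P|%fset p2) -> Omega -> X -> int),
    is_metric dist -> 0 < r -> 0 < eps ->
    random_hash hash ->
    sensitive dist PF hash r0 r (r * (1 + eps)) p0 p1 p2 ->
    (forall i, random_hash (h i)) ->
    (forall i, same_law Pr (h i) PF hash) ->
    mutually_independent Pr h ->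
    let n := #|` P|%fset in
    let S := annulus dist P q r0 (r * (1 + eps)) in
    let alpha := rho p1 p2 * (1 - ln p0 / ln p1) in
    alpha <= rho p1 p2 /\
    (\int[Pr]_w ((collisions (fun i => h i w) S q)%:R : R)%:E
      <= (C * (1 + ln (n%:R : R)) ^+ e
            * ((n%:R : R) `^ alpha / p1) * (#|` S|%fset)%:R)%:E)%E.
Proof.
exists (2 * (c + 1)), 1%N; split; first lra.
move=> X dist P r eps r0 p0 p1 p2 dF OmegaF PF hash q d Omega Pr h
  _ _ _ rhash sens rh law indep n S alpha.
case: sens => [_ [hp0 [hp1 [hp2 hp3]]] _ _ s0].
split; first exact: alpha_le.
pose Rn := rounds c #|` P|%fset.
pose Ln := L_param #|` P|%fset p1 p2.
pose k := k_param #|` P|%fset p2.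
pose K (t : 'I_Rn) (j : 'I_Ln) : {set hindex Rn Ln k} := [set (t, j, i) | i : 'I_k].
pose E t j p := [set w | forall i, i \in K t j -> h i w q = h i w p].
pose ind t j p w : R := ([forall i : 'I_k, h (t, j, i) w p == h (t, j, i) w q] : nat)%:R.
have indE t j p : ind t j p = \1_(E t j p).
  apply/funext => w; rewrite indicE /ind; congr (_ %:R); congr nat_of_bool.
  apply/idP/idP.
  - move/forallP => H; rewrite in_setE => i0 /imsetP [i _ ->].
    by move/eqP: (H i).
  - rewrite in_setE => H; apply/forallP => i; rewrite eq_sym; apply/eqP.
    by apply: H; apply/imsetP; exists i.
have cardK t j : #|K t j| = k.
  by rewrite card_imset ?card_ord // => a b [].
have measE t j p : measurable (E t j p).
  apply: (proj1 (key Pr PF hash _ h q p 1 rhash rh law indep _ (K t j))).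
  by apply: probability_le1; exact: Eq_meas.
have boundE t j p : p \in S -> (Pr (E t j p) <= (p0 ^+ k)%:E)%E.
  move=> pS.
  have hp : (PF (Eqs hash q p) <= p0%:E)%E.
    apply: s0; move: pS; rewrite /S /annulus !inE => /andP [_ /and3P [_ _]].
    by rewrite -ltNge => /ltW.
  have := proj2 (key Pr PF hash _ h q p p0 rhash rh law indep hp (K t j)).
  by rewrite cardK.
have colE w : ((collisions (fun i => h i w) S q)%:R : R) =
    \sum_(t < Rn) \sum_(j < Ln) \sum_(p <- S) ind t j p w.
  rewrite /collisions natr_sum; apply: eq_bigr => t _.
  by rewrite natr_sum; apply: eq_bigr => j _; rewrite natr_sum.
under eq_integral => w _ do rewrite colE.
have mind t j p : measurable_fun setT (ind t j p).
  by rewrite indE; exact: measurable_indic.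
have ind0 t j p w : 0 <= ind t j p w by [].
rewrite int_sum; first last.
- by move=> t w; apply: sumr_ge0 => j _; apply: sumr_ge0 => p _.
- by move=> t; apply: measurable_sum => j; apply: measurable_sum => p.
apply: (@le_trans _ _ (\sum_(t < Rn) \sum_(j < Ln) \sum_(p <- S) (p0 ^+ k)%:E)%E).
  apply: lee_sum => t _; rewrite int_sum; first last.
  - by move=> j w; apply: sumr_ge0 => p _.
  - by move=> j; apply: measurable_sum => p.
  apply: lee_sum => j _; rewrite int_sum //.
  rewrite big_seq_cond [X in (_ <= X)%E]big_seq_cond.
  apply: lee_sum => p /andP [pS _].
  by rewrite indE integral_indic // setIT; exact: boundE.
have cS : \sum_(p <- S) (p0 ^+ k : R) = p0 ^+ k *+ #|` S|.
  by rewrite big_const_seq count_predT iter_addr_0.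
have cJ (t : 'I_Rn) : (\sum_(j < Ln) \sum_(p <- S) (p0 ^+ k)%:E =
    ((p0 ^+ k *+ #|` S|) *+ Ln)%:E)%E.
  rewrite (eq_bigr (fun _ => (p0 ^+ k *+ #|` S|)%:E)); last first.
    by move=> j _; rewrite sumEFin cS.
  by rewrite sumEFin sumr_const card_ord.
rewrite (eq_bigr _ (fun t _ => cJ t)) sumEFin sumr_const card_ord lee_fin.
rewrite -(mulr_natr _ Rn) -(mulr_natr _ Ln) -(mulr_natr _ #|` S|).
have [S0|Spos] := posnP #|` S|.
  by rewrite S0 !(mulr0, mul0r).
have hn : (1 <= #|` P|)%N.
  by apply: leq_trans Spos _; apply: fsubset_leq_card; exact: fset_sub.
have H := arith _ _ _ _ _ hc hn hp0 hp1 hp2 hp3.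
have SS : (0 : R) <= #|` S|%:R by [].
have -> : p0 ^+ k * #|` S|%:R * Ln%:R * Rn%:R = Rn%:R * Ln%:R * p0 ^+ k * #|` S|%:R.
  by move: (p0 ^+ k) (#|` S|%:R : R) (Ln%:R : R) (Rn%:R : R) => a b e f; ring.
exact (ler_wpM2r SS H).
Qed.
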